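(* Let $d\ge 2$ and $p\ge 2$ be integers and let $X\in\mathcal{A}^d_{p,p}$. Put $\widetilde X:=\operatorname{tr}_{2,\ldots,2p-1}\big(XV^{(p-1)}\big)$, an operator on systems $1$ and $2p$. Then $\widetilde X\in\mathcal{A}^d_{1,1}$ (as an operator on systems $1,2p$), and $$V^{(p-1)}XV^{(p-1)}=\widetilde X\otimes \prod_{k=1}^{p-1}W_{p+1-k,\,p+k},$$ where the first factor acts on systems $1,2p$ and the second on systems $2,\ldots,2p-1$.
   Context: Consider $(\mathbb{C}^d)^{\otimes 2p}$ with tensor factors (systems) labelled $1,\ldots,2p$. For distinct systems $a,b$ let $W_{a,b}=\sum_{i,j=1}^d |i\rangle\langle j|_a\otimes |i\rangle\langle j|_b$ (the partial transpose on system $b$ of the swap of $a$ and $b$; it equals $d$ times the projector onto the maximally entangled state of $a,b$), extended by the identity on the other systems. Define $V^{(p-1)}=\prod_{k=1}^{p-1}W_{p+1-k,\,p+k}$ (identity on systems $1$ and $2p$). For $\pi$ in the symmetric group $\mathcal{S}_{2p}$ let $V_\pi$ be the operator permuting the $2p$ tensor factors according to $\pi$. The algebra of partially transposed permutation operators is $\mathcal{A}^d_{p,p}=\operatorname{span}_{\mathbb{C}}\{V_\pi^{t_{p+1}\circ\cdots\circ t_{2p}}:\pi\in\mathcal{S}_{2p}\}$, where $t_k$ is the partial transposition (in the standard basis) on system $k$. Analogously $\mathcal{A}^d_{1,1}$ on two systems $a,b$ is $\operatorname{span}\{\mathbb{1},W_{a,b}\}$. *)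

(* Defs.v *)
(* Operators on (C^d)^{\otimes n} as matrices indexed by
   multi-indices i : {ffun 'I_n -> 'I_d}.  Systems are 0-based: the paper's
   system k (1 <= k <= n) is the ordinal k-1. *)
From HB Require Import structures.
From mathcomp Require Import all_boot all_order all_fingroup all_algebra.
Set Implicit Arguments. Unset Strict Implicit. Unset Printing Implicit Defensive.
Import GRing.Theory Num.Theory.
Local Open Scope ring_scope.

Section Ops.
Variable C : numClosedFieldType.
Variable d : nat.

Definition idx (n : nat) := {ffun 'I_n -> 'I_d}.
Definition op (n : nat) := idx n -> idx n -> C.

Definition idop {n} : op n := fun i j => (i == j)%:R.
Definition mulop {n} (A B : op n) : op n :=
  fun i j => \sum_(k : idx n) A i k * B k j.

Definition Wop {n} (a b : 'I_n) : op n := fun i j =>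
  ((i a == i b) && (j a == j b) &&
   [forall c, (c != a) && (c != b) ==> (i c == j c)])%:R.

(* V_pi : permutes tensor factors, V_pi (e_{j_1}..e_{j_n}) = e_{j_{pi^-1 1}}.. *)
Definition Vperm {n} (pi : {perm 'I_n}) : op n := fun i j =>
  [forall c, i (pi c) == j c]%:R.

Definition mixidx {n} (T : {set 'I_n}) (i j : idx n) : idx n :=
  [ffun c => if c \in T then j c else i c].
Definition ptrans {n} (T : {set 'I_n}) (A : op n) : op n :=
  fun i j => A (mixidx T i j) (mixidx T j i).

(* Number of systems 2p, written so that the first/last systems are ord0 and
   ord_max and the middle ones 2..2p-1 are indexed by 'I_((p-1)+(p-1)). *)
Definition nsys (p : nat) := (p.-1 + p.-1).+2.

(* A^d_{p,p}: span of partially transposed permutations, transposition on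
   systems p+1..2p, i.e. 0-based ordinals c with p-1 < c. *)
Definition in_App (p : nat) (X : op (nsys p)) : Prop :=
  exists a : {perm 'I_(nsys p)} -> C, forall i j,
    X i j = \sum_(pi : {perm 'I_(nsys p)})
              a pi * ptrans [set c : 'I_(nsys p) | (p.-1 < c)%N] (Vperm pi) i j.

Definition in_A11 (Y : op 2) : Prop :=
  exists a b : C, forall u v, Y u v = a * idop u v + b * Wop ord0 ord_max u v.

Definition mid {m} (c : 'I_m) : 'I_m.+2 := lift ord0 (lift ord_max c).

(* V^{(p-1)} = prod_{k=1}^{p-1} W_{p+1-k, p+k} on 2p systems
   (k = K-1 ranges over 'I_(p-1)) *)
Definition Vpm1 (p : nat) : op (nsys p) :=
  \big[mulop/idop]_(k < p.-1)
     Wop (mid (lshift p.-1 (rev_ord k))) (mid (rshift p.-1 k)).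

Definition Vmid (p : nat) : op (p.-1 + p.-1) :=
  \big[mulop/idop]_(k < p.-1) Wop (lshift p.-1 (rev_ord k)) (rshift p.-1 k).

Definition outer {m} (i : idx m.+2) : idx 2 :=
  [ffun c : 'I_2 => if c == ord0 then i ord0 else i ord_max].
Definition inner {m} (i : idx m.+2) : idx m := [ffun c => i (mid c)].

Definition glue {m} (u : idx 2) (k : idx m) : idx m.+2 :=
  [ffun c => match unlift ord0 c with
             | None => u ord0
             | Some c1 => match unlift ord_max c1 with
                          | None => u ord_max
                          | Some c2 => k c2 end end].

Definition ptr_mid {m} (Y : op m.+2) : op 2 :=
  fun u v => \sum_(k : idx m) Y (glue u k) (glue v k).

Definition tens {m} (A : op 2) (B : op m) : op m.+2 :=
  fun i j => A (outer i) (outer j) * B (inner i) (inner j).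

End Ops.

Arguments Vpm1 {C d} p.
Arguments Vmid {C d} p.
Arguments in_App {C d} p X.

(* Main.v *)
Require Import Defs.
From HB Require Import structures.
From mathcomp Require Import all_boot all_order all_fingroup all_algebra.
From mathcomp Require Import zify.
From Stdlib Require Import FunctionalExtensionality.
Set Implicit Arguments. Unset Strict Implicit. Unset Printing Implicit Defensive.
Import GRing.Theory Num.Theory.
Local Open Scope ring_scope.


Section Q.
Variable C : numClosedFieldType.
Variable d : nat.

Lemma natbM (b1 b2 : bool) : (b1%:R * b2%:R : C) = (b1 && b2)%:R.
Proof. by case: b1; case: b2; rewrite ?mul1r ?mul0r. Qed.

Lemma sum_pred1b (T : finType) (t0 : T) (P : T -> bool) (b : bool) :
  (forall t, P t = (t == t0) && b) -> \sum_(t : T) ((P t)%:R : C) = b%:R.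
Proof.
move=> H; rewrite (bigD1 t0) //= H eqxx /= big1 ?addr0 // => t /negbTE nt.
by rewrite H nt.
Qed.

Lemma sum_eqF (T : finType) (t0 : T) (F : T -> C) :
  \sum_(t : T) (t0 == t)%:R * F t = F t0.
Proof.
rewrite (bigD1 t0) //= eqxx mul1r big1 ?addr0 // => t nt.
by rewrite eq_sym (negbTE nt) mul0r.
Qed.

Lemma all_iota1 (P : pred nat) K : all P (iota 1 K) = all (fun k => P k.+1) (iota 0 K).
Proof. by rewrite (iotaDl 1 0 K) all_map. Qed.

Lemma all_iotaP (P : pred nat) K : reflect (forall k, (k < K)%N -> P k) (all P (iota 0 K)).
Proof.
apply: (iffP allP) => h k; first by move=> hk; apply: h; rewrite mem_iota.
by rewrite mem_iota => /andP[_ hk]; apply: h.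
Qed.

Definition pairsb n (a b : nat -> 'I_n) K (c : 'I_n) :=
  all (fun k => (c != a k) && (c != b k)) (iota 0 K).
Definition Pb n (a b : nat -> 'I_n) K (i j : idx d n) :=
  all (fun k => (i (a k) == i (b k)) && (j (a k) == j (b k))) (iota 0 K) &&
  [forall c, pairsb a b K c ==> (i c == j c)].

Lemma bigW n K : forall (a b : nat -> 'I_n),
  (forall k l, (k < K)%N -> (l < K)%N -> a k != b l) ->
  (forall k l, (k < K)%N -> (l < K)%N -> k != l -> (a k != a l) && (b k != b l)) ->
  forall i j, (\big[@mulop C d n/@idop C d n]_(k < K) Wop C (a k) (b k)) i j = (Pb a b K i j)%:R.
Proof.
elim: K => [|K IH] a b hab hdis i j.
  rewrite big_ord0 /idop /Pb /pairsb /=.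
  have E : (i == j) = [forall c, i c == j c].
    apply/eqP/forallP => [-> c //|h]; apply/ffunP => c; exact/eqP/h.
  by rewrite E.
rewrite big_ord_recl.
have -> : \big[@mulop C d n/@idop C d n]_(k < K) Wop C (a (lift ord0 k)) (b (lift ord0 k)) =
          \big[@mulop C d n/@idop C d n]_(k < K) Wop C (a k.+1) (b k.+1).
  by apply: eq_bigr => k _; rewrite lift0.
rewrite /mulop.
set m0 : idx d n := [ffun c => if (c == a 0%N) || (c == b 0%N) then j c else i c].
rewrite (eq_bigr (fun m : idx d n => (((i (a 0%N) == i (b 0%N)) && (m (a 0%N) == m (b 0%N)) &&
   [forall c, (c != a 0%N) && (c != b 0%N) ==> (i c == m c)]) &&
   Pb (fun k => a k.+1) (fun k => b k.+1) K m j)%:R)); last first.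
  move=> m _; rewrite (IH (fun k => a k.+1) (fun k => b k.+1)) ?natbM //.
  - by move=> k l hk hl; apply: hab.
  - by move=> k l hk hl hkl; apply: hdis.
eapply (@sum_pred1b _ m0) => m.
rewrite /Pb /pairsb /= !all_iota1.
have ab0 : a 0%N != b 0%N by apply: hab.
have D : forall k, (k < K)%N -> [/\ a k.+1 != a 0%N, a k.+1 != b 0%N, b k.+1 != a 0%N & b k.+1 != b 0%N].
  move=> k hk; have /andP[h1 h2] := hdis k.+1 0%N hk isT isT.
  split => //; first exact: hab.
  by rewrite eq_sym; apply: hab.
have m0E : forall c, m0 c = if (c == a 0%N) || (c == b 0%N) then j c else i c.
  by move=> c; rewrite ffunE.
apply/idP/idP.
- case/andP => [/andP[/andP[hi0 hm0] /forallP hout] /andP[/all_iotaP hm /forallP hrest]].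
  have hrest' : forall c, (c == a 0%N) || (c == b 0%N) -> m c = j c.
    move=> c hc; apply/eqP; apply: (implyP (hrest c)); apply/all_iotaP => k hk.
    have [h1 h2 h3 h4] := D k hk.
    by case/orP: hc => /eqP ->; rewrite ?(eq_sym (a 0%N)) ?(eq_sym (b 0%N)) ?h1 ?h2 ?h3 ?h4.
  have hout' : forall c, ~~ ((c == a 0%N) || (c == b 0%N)) -> i c = m c.
    move=> c; rewrite negb_or => hc; apply/eqP; exact: (implyP (hout c)).
  have -> : m == m0.
    apply/eqP/ffunP => c; rewrite m0E; case: ifP => hc; first exact: hrest'.
    by rewrite hout' ?hc.
  rewrite hi0 /=.
  have -> : j (a 0%N) == j (b 0%N).
    by rewrite -!hrest' ?eqxx ?orbT.
  rewrite /=; apply/andP; split.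
  + apply/all_iotaP => k hk; have [h1 h2 h3 h4] := D k hk.
    have /andP[/eqP e1 ->] := hm k hk.
    have n1 : ~~ ((a k.+1 == a 0%N) || (a k.+1 == b 0%N)) by rewrite negb_or h1 h2.
    have n2 : ~~ ((b k.+1 == a 0%N) || (b k.+1 == b 0%N)) by rewrite negb_or h3 h4.
    by rewrite (hout' _ n1) (hout' _ n2) e1 eqxx.
  + apply/forallP => c; apply/implyP => /andP[/andP[c1 c2] cr].
    have n1 : ~~ ((c == a 0%N) || (c == b 0%N)) by rewrite negb_or c1 c2.
    rewrite (hout' _ n1); apply: (implyP (hrest c)).
    by move: cr; rewrite all_iota1.
- case/and3P => [/eqP -> /andP[/andP[hi0 hj0] /all_iotaP hij] /forallP hout].
  have e1 : m0 (a 0%N) = j (a 0%N) by rewrite m0E eqxx.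
  have e2 : m0 (b 0%N) = j (b 0%N) by rewrite m0E eqxx orbT.
  apply/and3P; split.
  + rewrite hi0 e1 e2 hj0 /=.
    apply/forallP => c; apply/implyP => /andP[c1 c2].
    by rewrite m0E (negbTE c1) (negbTE c2).
  + apply/all_iotaP => k hk; have [h1 h2 h3 h4] := D k hk.
    rewrite !m0E (negbTE h1) (negbTE h2) (negbTE h3) (negbTE h4) /=.
    exact: hij.
  + apply/forallP => c; apply/implyP => hc; rewrite m0E.
    case: ifP => hab0 //.
    apply: (implyP (hout c)); move: hab0; rewrite -negb_or => ->.
    by rewrite all_iota1.
Qed.

Definition upd n (w : idx d n) (s : 'I_n) (x : 'I_d) : idx d n :=
  [ffun c => if c == s then x else w c].

Lemma updE n (w : idx d n) s x c : upd w s x c = if c == s then x else w c.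
Proof. by rewrite ffunE. Qed.

Lemma upd_upd n (w : idx d n) s x y : upd (upd w s x) s y = upd w s y.
Proof. by apply/ffunP => c; rewrite !updE; case: ifP => // ->. Qed.

Lemma upd_id n (w : idx d n) s : upd w s (w s) = w.
Proof. by apply/ffunP => c; rewrite !updE; case: ifP => // /eqP ->. Qed.

Lemma sum_upd n (s : 'I_n) (G : idx d n -> C) :
  \sum_(w : idx d n) \sum_(x : 'I_d) G (upd w s x) = d%:R * \sum_(w : idx d n) G w.
Proof.
have step : forall x y, \sum_(w : idx d n) (w s == y)%:R * G (upd w s x) =
                        \sum_(w : idx d n) (w s == x)%:R * G w.
  move=> x y.
  pose psi (w : idx d n) := upd w s (tperm x y (w s)).
  have psiK : involutive psi.
    move=> w; rewrite /psi upd_upd updE eqxx tpermK; exact: upd_id.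
  rewrite [RHS](reindex_inj (can_inj psiK)) /=.
  apply: eq_bigr => w _; rewrite /psi updE eqxx.
  have -> : (tperm x y (w s) == x) = (w s == y).
    by rewrite -{2}(tpermR x y) (inj_eq perm_inj).
  by case: (w s =P y) => [->|]; rewrite ?mul0r // tpermR.
rewrite exchange_big /=.
have cl : forall x, \sum_(w : idx d n) G (upd w s x) =
                    d%:R * \sum_(w : idx d n) (w s == x)%:R * G w.
  move=> x.
  rewrite (eq_bigr (fun w : idx d n => \sum_(y : 'I_d) (w s == y)%:R * G (upd w s x))); last first.
    by move=> w _; rewrite (eq_bigr (fun y => (w s == y)%:R * G (upd w s x))) // sum_eqF.
  rewrite exchange_big /= (eq_bigr (fun y => \sum_(w : idx d n) (w s == x)%:R * G w)); last first.
    by move=> y _; apply: step.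
  by rewrite sumr_const card_ord mulr_natl.
rewrite (eq_bigr _ (fun x _ => cl x)) -mulr_sumr exchange_big /=.
congr (_ * _); apply: eq_bigr => w _.
rewrite (eq_bigr (fun x : 'I_d => (w s == x)%:R * G w)) //.
by rewrite sum_eqF.
Qed.


Section QQ.
Variable m : nat.
Variable x0 : 'I_d.
Local Notation n := m.+2.

Definition midb (c : 'I_n) := (c != ord0) && (c != ord_max).
Definition Aof (u v : idx d 2) (w : idx d n) (s : 'I_n) :=
  if s == ord0 then v ord0 else if s == ord_max then u ord_max else w s.
Definition Bof (u v : idx d 2) (w : idx d n) (s : 'I_n) :=
  if s == ord0 then u ord0 else if s == ord_max then v ord_max else w s.
Definition Gq (r : {perm 'I_n}) u v (w : idx d n) :=
  [&& w ord0 == x0, w ord_max == x0 & [forall s, Aof u v w s == Bof u v w (r s)]].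
Definition Q (r : {perm 'I_n}) u v : C := \sum_(w : idx d n) (Gq r u v w)%:R.

Lemma Amid u v w s : midb s -> Aof u v w s = w s.
Proof. by case/andP => h1 h2; rewrite /Aof (negbTE h1) (negbTE h2). Qed.
Lemma Bmid u v w s : midb s -> Bof u v w s = w s.
Proof. by case/andP => h1 h2; rewrite /Bof (negbTE h1) (negbTE h2). Qed.

Lemma Aupd u v w s x c : midb s ->
  Aof u v (upd w s x) c = if c == s then x else Aof u v w c.
Proof.
move=> hs; case: (c =P s) => [->|/eqP ne]; first by rewrite Amid // updE eqxx.
by rewrite /Aof updE (negbTE ne).
Qed.
Lemma Bupd u v w s x c : midb s ->
  Bof u v (upd w s x) c = if c == s then x else Bof u v w c.
Proof.
move=> hs; case: (c =P s) => [->|/eqP ne]; first by rewrite Bmid // updE eqxx.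
by rewrite /Bof updE (negbTE ne).
Qed.

Lemma qstep (r : {perm 'I_n}) s0 : midb s0 -> r s0 != s0 -> forall u v,
  d%:R * Q r u v = Q (tperm s0 ((r^-1)%g s0) * r)%g u v.
Proof.
move=> hs0 hr u v.
set c0 := (r^-1)%g s0.
have rc0 : r c0 = s0 by rewrite /c0 permKV.
have c0s0 : (c0 == s0) = false.
  by apply/negbTE; apply: contra hr => /eqP e; rewrite -{1}e rc0.
have rs : forall s, s != c0 -> (r s == s0) = false.
  by move=> s ns; apply/negbTE; apply: contra ns; rewrite -rc0 (inj_eq perm_inj).
have rs0 : (r s0 == s0) = false by apply/negbTE.
have s0c0 : (s0 == c0) = false by rewrite eq_sym.
have r'E : forall s, (tperm s0 c0 * r)%g s =
   if s == s0 then s0 else if s == c0 then r s0 else r s.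
  move=> s; rewrite permM; case: (s =P s0) => [->|/eqP n0]; first by rewrite tpermL.
  case: (s =P c0) => [->|/eqP n1]; first by rewrite tpermR.
  by rewrite tpermD // eq_sym.
have o0 : (ord0 == s0) = false by case/andP: hs0 => h _; apply/negbTE; rewrite eq_sym.
have om : (ord_max == s0) = false by case/andP: hs0 => _ h; apply/negbTE; rewrite eq_sym.
rewrite /Q -(sum_upd s0); apply: eq_bigr => w _.
eapply (@sum_pred1b _ (Bof u v w (r s0))) => x.
rewrite /Gq !updE o0 om.
case: (w ord0 == x0); case: (w ord_max == x0); rewrite ?andbF //=.
apply/idP/idP.
- move/forallP => h.
  have hx : x == Bof u v w (r s0).
    by have := h s0; rewrite Aupd // Bupd // eqxx rs0.
  rewrite hx /=; apply/forallP => s; rewrite r'E.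
  case: (s =P s0) => [->|/eqP n0]; first by rewrite Amid // Bmid.
  case: (s =P c0) => [->|/eqP n1].
    by have := h c0; rewrite Aupd // Bupd // c0s0 rc0 eqxx => /eqP ->.
  by have := h s; rewrite Aupd // Bupd // (negbTE n0) rs.
- case/andP => /eqP hx /forallP h; apply/forallP => s.
  rewrite Aupd // Bupd //.
  case: (s =P s0) => [->|/eqP n0]; first by rewrite rs0 hx.
  case: (s =P c0) => [->|/eqP n1].
    by rewrite rc0 eqxx; have := h c0; rewrite r'E c0s0 eqxx hx.
  by rewrite rs //; have := h s; rewrite r'E (negbTE n0) (negbTE n1).
Qed.

Lemma r'E (r : {perm 'I_n}) s0 s : r s0 != s0 ->
  (tperm s0 ((r^-1)%g s0) * r)%g s =
   if s == s0 then s0 else if s == (r^-1)%g s0 then r s0 else r s.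
Proof.
move=> hr; set c0 := (r^-1)%g s0.
have rc0 : r c0 = s0 by rewrite /c0 permKV.
rewrite permM; case: (s =P s0) => [->|/eqP n0]; first by rewrite tpermL.
case: (s =P c0) => [->|/eqP n1]; first by rewrite tpermR.
by rewrite tpermD // eq_sym.
Qed.

Lemma max0 : (ord_max == ord0 :> 'I_n) = false. Proof. by []. Qed.

Lemma I2cases (c : 'I_2) : c = ord0 \/ c = ord_max.
Proof.
case: c => [[|[|k]] hk]; first by left; apply: val_inj.
  by right; apply: val_inj.
by [].
Qed.

Lemma eq2 (u v : idx d 2) : (u == v) = (u ord0 == v ord0) && (u ord_max == v ord_max).
Proof.
apply/eqP/andP => [-> //|[/eqP h1 /eqP h2]]; apply/ffunP => c.
by case: (I2cases c) => ->.
Qed.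

Lemma W2 (u v : idx d 2) :
  Wop C ord0 ord_max u v = ((u ord0 == u ord_max) && (v ord0 == v ord_max))%:R.
Proof.
rewrite /Wop; congr (_%:R); congr (nat_of_bool _).
have -> : [forall c : 'I_2, (c != ord0) && (c != ord_max) ==> (u c == v c)].
  by apply/forallP => c; case: (I2cases c) => ->; rewrite eqxx ?andbF.
by rewrite andbT.
Qed.

Lemma nmid0 : ~~ midb ord0. Proof. by rewrite /midb eqxx. Qed.
Lemma nmidm : ~~ midb ord_max. Proof. by rewrite /midb eqxx andbF. Qed.

Lemma nmid (t : 'I_n) : ~~ midb t -> (t == ord0) || (t == ord_max).
Proof. by rewrite /midb negb_and !negbK. Qed.

Lemma qA11 (r : {perm 'I_n}) : (0 < d)%N ->
  exists a b : C, forall u v, Q r u v = a * idop C u v + b * Wop C ord0 ord_max u v.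
Proof.
move=> hd.
move: {2}#|[set s | r s != s]|.+1 (ltnSn #|[set s | r s != s]|) => k.
elim: k r => // k IH r hk.
case: (pickP [pred s | midb s && (r s != s)]) => [s0 /andP[hs0 hr] | none].
  set r' := (tperm s0 ((r^-1)%g s0) * r)%g.
  have rc0 : r ((r^-1)%g s0) = s0 by rewrite permKV.
  have hlt : (#|[set s | r' s != s]| < #|[set s | r s != s]|)%N.
    apply: proper_card; apply/properP; split.
      apply/subsetP => s; rewrite !inE /r' r'E //.
      case: (s =P s0) => [->|_]; first by rewrite eqxx.
      case: (s =P (r^-1)%g s0) => [->|//]; rewrite rc0 => _.
      by apply: contra hr => /eqP e; rewrite {1}e rc0.
    exists s0; first by rewrite inE.
    by rewrite inE /r' r'E // !eqxx.
  have [a [b H]] := IH r' (leq_trans hlt hk).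
  have dn0 : (d%:R : C) != 0 by rewrite pnatr_eq0 -lt0n.
  exists (a / d%:R), (b / d%:R) => u v.
  have e := qstep hs0 hr u v; rewrite H in e.
  have -> : Q r u v = (d%:R)^-1 * (d%:R * Q r u v) by rewrite mulrA mulVf // mul1r.
  by rewrite e mulrDr !mulrA ![_^-1 * _]mulrC.
have hfix : forall s, midb s -> r s = s.
  by move=> s hs; have := none s; rewrite /= hs /= => /negbFE/eqP.
have nm2 : forall t, ~~ midb t -> ~~ midb (r t).
  move=> t ht; apply/negP => hrt; have e := hfix _ hrt.
  by move: ht; rewrite -(perm_inj e) hrt.
have A0 : forall u v w, Aof u v w ord0 = v ord0 by move=> *; rewrite /Aof eqxx.
have Am : forall u v w, Aof u v w ord_max = u ord_max by move=> *; rewrite /Aof max0 eqxx.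
have B0 : forall u v w, Bof u v w ord0 = u ord0 by move=> *; rewrite /Bof eqxx.
have Bm : forall u v w, Bof u v w ord_max = v ord_max by move=> *; rewrite /Bof max0 eqxx.
have allE : forall (cnd : idx d 2 -> idx d 2 -> bool) u v,
  (forall w, [forall s, Aof u v w s == Bof u v w (r s)] = cnd u v) ->
  Q r u v = (\sum_(w : idx d n) ((w ord0 == x0) && (w ord_max == x0))%:R) * (cnd u v)%:R.
  move=> cnd u v h; rewrite /Q mulr_suml; apply: eq_bigr => w _.
  by rewrite natbM /Gq h andbA.
have := nmid (nm2 ord0 nmid0); case/orP => /eqP r0.
  have rm : r ord_max = ord_max.
    have := nmid (nm2 ord_max nmidm); case/orP => /eqP // e.
    by move: (perm_inj (etrans e (esym r0))).
  exists (\sum_(w : idx d n) ((w ord0 == x0) && (w ord_max == x0))%:R), 0 => u v.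
  rewrite mul0r addr0 /idop eq2.
  rewrite (allE (fun u v => (u ord0 == v ord0) && (u ord_max == v ord_max))) // => w.
  apply/forallP/andP => [h|[h1 h2] s].
    by move: (h ord0) (h ord_max); rewrite A0 Am r0 rm B0 Bm => /eqP -> /eqP ->; split.
  case: (s =P ord0) => [->|/eqP s0]; first by rewrite A0 r0 B0 eq_sym.
  case: (s =P ord_max) => [->|/eqP s1]; first by rewrite Am rm Bm.
  have hs : midb s by rewrite /midb s0 s1.
  by rewrite hfix // Amid // Bmid.
have rm : r ord_max = ord0.
  have := nmid (nm2 ord_max nmidm); case/orP => /eqP // e.
  by move: (perm_inj (etrans e (esym r0))).
exists 0, (\sum_(w : idx d n) ((w ord0 == x0) && (w ord_max == x0))%:R) => u v.
rewrite mul0r add0r W2.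
rewrite (allE (fun u v => (u ord0 == u ord_max) && (v ord0 == v ord_max))) // => w.
apply/forallP/andP => [h|[h1 h2] s].
  by move: (h ord0) (h ord_max); rewrite A0 Am r0 rm B0 Bm => /eqP -> /eqP ->; split.
case: (s =P ord0) => [->|/eqP s0]; first by rewrite A0 r0 Bm.
case: (s =P ord_max) => [->|/eqP s1]; first by rewrite Am rm B0 eq_sym.
have hs : midb s by rewrite /midb s0 s1.
by rewrite hfix // Amid // Bmid.
Qed.

End QQ.
End Q.


Section S.
Variable C : numClosedFieldType.
Variable d : nat.
Variable q : nat.
Local Notation m := (q.+1 + q.+1)%N.
Local Notation n := m.+2.

Lemma midbE (c : 'I_n) : midb c = (0 < c < m.+1)%N.
Proof.
rewrite /midb -!(inj_eq val_inj) /=.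
have := ltn_ord c; case: c => c hc /= _; apply/idP/idP; lia.
Qed.

Definition tau (c : 'I_n) : 'I_n := if midb c then rev_ord c else c.

Lemma tauE (c : 'I_n) : midb c -> val (tau c) = (m.+1 - c)%N.
Proof. by move=> h; rewrite /tau h /=. Qed.

Lemma tau_mid c : midb c -> midb (tau c).
Proof. move=> h; move: (h); rewrite !midbE tauE //; lia. Qed.

Lemma tauK : involutive tau.
Proof.
move=> c; case h: (midb c); last by rewrite /tau h h.
apply: val_inj; rewrite tauE ?tau_mid // tauE //; move: h; rewrite midbE /=; lia.
Qed.

Definition Tset := [set c : 'I_n | (q.+1 < c)%N].

Lemma tauT c : midb c -> (tau c \in Tset) = ~~ (c \in Tset).
Proof. move=> h; rewrite !inE tauE //; move: h; rewrite midbE; lia. Qed.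


Definition aa (k : nat) : 'I_n := inord (q.+1 - k).
Definition bb (k : nat) : 'I_n := inord (q.+2 + k).

Lemma aa_val k : (k < q.+1)%N -> val (aa k) = (q.+1 - k)%N.
Proof. by move=> hk; rewrite /aa /= inordK //; lia. Qed.
Lemma bb_val k : (k < q.+1)%N -> val (bb k) = (q.+2 + k)%N.
Proof. by move=> hk; rewrite /bb /= inordK //; lia. Qed.

Lemma aa_mid k : (k < q.+1)%N -> midb (aa k).
Proof. by move=> hk; rewrite midbE aa_val //; lia. Qed.
Lemma bb_mid k : (k < q.+1)%N -> midb (bb k).
Proof. by move=> hk; rewrite midbE bb_val //; lia. Qed.

Lemma tau_aa k : (k < q.+1)%N -> tau (aa k) = bb k.
Proof. by move=> hk; apply: val_inj; rewrite tauE ?aa_mid // aa_val // bb_val //; lia. Qed.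
Lemma tau_bb k : (k < q.+1)%N -> tau (bb k) = aa k.
Proof. by move=> hk; rewrite -tau_aa // tauK. Qed.

Lemma mid_cases (c : 'I_n) : midb c -> exists2 k, (k < q.+1)%N & (c = aa k \/ c = bb k).
Proof.
rewrite midbE => /andP[h1 h2]; case: (leqP c q.+1) => hc.
  exists (q.+1 - c)%N; first lia.
  by left; apply: val_inj; rewrite aa_val /=; lia.
exists (c - q.+2)%N; first lia.
by right; apply: val_inj; rewrite bb_val /=; lia.
Qed.

Definition peb (i : idx d n) := [forall c, midb c ==> (i c == i (tau c))].
Definition Vb (l j : idx d n) :=
  [&& peb l, peb j, l ord0 == j ord0 & l ord_max == j ord_max].

Lemma Vpm1E (i j : idx d n) : @Vpm1 C d q.+2 i j = (Vb i j)%:R.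
Proof.
have -> : @Vpm1 C d q.+2 = \big[@mulop C d n/@idop C d n]_(k < q.+1) Wop C (aa k) (bb k).
  rewrite /Vpm1; apply: eq_bigr => k _; congr Wop; apply: val_inj.
    have := ltn_ord k.
    by rewrite aa_val // /mid /= /bump leq0n; case: leqP => h /= hk; lia.
  have := ltn_ord k.
  by rewrite bb_val // /mid /= /bump leq0n; case: leqP => h /= hk; lia.
rewrite bigW; last first.
- move=> k l hk hl hkl; apply/andP; split; apply/negP => /eqP /(congr1 val).
    by rewrite !aa_val //; lia.
  by rewrite !bb_val //; lia.
- by move=> k l hk hl; apply/negP => /eqP /(congr1 val); rewrite aa_val // bb_val //; lia.
congr (_%:R); congr (nat_of_bool _).
rewrite /Pb /Vb /pairsb.
have pout : forall c, ~~ midb c -> all (fun k => (c != aa k) && (c != bb k)) (iota 0 q.+1).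
  move=> c hc; apply/all_iotaP => k hk.
  by apply/andP; split; apply: contraNneq hc => ->; rewrite ?aa_mid ?bb_mid.
apply/idP/idP.
- case/andP => /all_iotaP h1 /forallP h2.
  have hp : forall (f : idx d n), (forall k, (k < q.+1)%N -> f (aa k) == f (bb k)) -> peb f.
    move=> f hf; apply/forallP => c; apply/implyP => /mid_cases [k hk [->|->]].
      by rewrite tau_aa //; apply: hf.
    by rewrite tau_bb // eq_sym; apply: hf.
  rewrite !hp.
  + by rewrite (implyP (h2 ord0)) ?(implyP (h2 ord_max)) ?pout ?nmid0 ?nmidm.
  + by move=> k hk; case/andP: (h1 k hk).
  + by move=> k hk; case/andP: (h1 k hk).
- case/and4P => pi pj e0 em; apply/andP; split.
    apply/all_iotaP => k hk.
    have := implyP (forallP pi (aa k)) (aa_mid hk); have := implyP (forallP pj (aa k)) (aa_mid hk).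
    by rewrite tau_aa // => -> ->.
  apply/forallP => c; apply/implyP => hc.
  case hm: (midb c).
    case: (mid_cases hm) => k hk hck.
    by have := allP hc k; rewrite mem_iota /= add0n hk => /(_ isT); case: hck => ->; rewrite eqxx ?andbF.
  by case/orP: (nmid (negbT hm)) => /eqP ->.
Qed.


Definition aa' (k : nat) : 'I_m := @inord (q + q.+1) (q - k).
Definition bb' (k : nat) : 'I_m := @inord (q + q.+1) (q.+1 + k).

Lemma aa'_val k : (k < q.+1)%N -> val (aa' k) = (q - k)%N.
Proof.
move=> hk; have hb : (q - k < (q + q.+1).+1)%N by lia.
by change (nat_of_ord (aa' k) = (q - k)%N); rewrite /aa' (inordK hb).
Qed.
Lemma bb'_val k : (k < q.+1)%N -> val (bb' k) = (q.+1 + k)%N.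
Proof.
move=> hk; have hb : (q.+1 + k < (q + q.+1).+1)%N by lia.
by change (nat_of_ord (bb' k) = (q.+1 + k)%N); rewrite /bb' (inordK hb).
Qed.

Lemma rev_aa' k : (k < q.+1)%N -> rev_ord (aa' k) = bb' k.
Proof. by move=> hk; apply: val_inj; rewrite /= aa'_val // bb'_val //; lia. Qed.
Lemma rev_bb' k : (k < q.+1)%N -> rev_ord (bb' k) = aa' k.
Proof. by move=> hk; rewrite -rev_aa' // rev_ordK. Qed.

Lemma cases' (c : 'I_m) : exists2 k, (k < q.+1)%N & (c = aa' k \/ c = bb' k).
Proof.
have := ltn_ord c; case: (leqP c q) => hc hcm.
  exists (q - c)%N; first lia.
  by left; apply: val_inj; rewrite aa'_val /=; lia.
exists (c - q.+1)%N; first lia.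
by right; apply: val_inj; rewrite bb'_val /=; lia.
Qed.

Definition VbM1 (k : idx d m) := [forall c, k c == k (rev_ord c)].

Lemma VmidE (i j : idx d m) : @Vmid C d q.+2 i j = (VbM1 i && VbM1 j)%:R.
Proof.
have -> : @Vmid C d q.+2 = \big[@mulop C d m/@idop C d m]_(k < q.+1) Wop C (aa' k) (bb' k).
  rewrite /Vmid; apply: eq_bigr => k _; congr Wop; apply: val_inj.
    by have := ltn_ord k; rewrite aa'_val //= => hk; lia.
  by have := ltn_ord k; rewrite bb'_val //= => hk; lia.
rewrite bigW; last first.
- move=> k l hk hl hkl; apply/andP; split; apply/negP => /eqP /(congr1 val).
    by rewrite !aa'_val //; lia.
  by rewrite !bb'_val //; lia.
- by move=> k l hk hl; apply/negP => /eqP /(congr1 val); rewrite aa'_val // bb'_val //; lia.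
congr (_%:R); congr (nat_of_bool _).
rewrite /Pb /VbM1 /pairsb.
have -> : [forall c, all (fun k => (c != aa' k) && (c != bb' k)) (iota 0 q.+1) ==> (i c == j c)].
  apply/forallP => c; apply/implyP => hc.
  case: (cases' c) => k hk hck.
  by have := allP hc k; rewrite mem_iota /= add0n hk => /(_ isT); case: hck => ->; rewrite eqxx ?andbF.
rewrite andbT.
have hp : forall (f : idx d m), (forall k, (k < q.+1)%N -> f (aa' k) == f (bb' k)) ->
    [forall c, f c == f (rev_ord c)].
  move=> f hf; apply/forallP => c; case: (cases' c) => k hk [->|->].
    by rewrite rev_aa' //; apply: hf.
  by rewrite rev_bb' // eq_sym; apply: hf.
apply/idP/idP.
- move/all_iotaP => h1; rewrite !hp //.
  + by move=> k hk; case/andP: (h1 k hk).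
  + by move=> k hk; case/andP: (h1 k hk).
- case/andP => /forallP pi /forallP pj; apply/all_iotaP => k hk.
  by rewrite -rev_aa' // pi pj.
Qed.

Lemma mid_val (c : 'I_m) : val (mid c) = c.+1.
Proof. by have := ltn_ord c; rewrite /mid /= /bump leq0n; case: leqP => h /= hk; lia. Qed.

Lemma mid_mid (c : 'I_m) : midb (mid c).
Proof. by have := ltn_ord c; rewrite midbE mid_val => hc; lia. Qed.

Lemma tau_midc (c : 'I_m) : tau (mid c) = mid (rev_ord c).
Proof.
apply: val_inj; rewrite tauE ?mid_mid // !mid_val /=.
by have := ltn_ord c => hc; lia.
Qed.

Lemma mid_surj (c : 'I_n) : midb c -> exists c', c = mid c'.
Proof.
rewrite midbE => /andP[h1 h2].
have h : (c.-1 < m)%N by lia.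
exists (Ordinal h); apply: val_inj; rewrite mid_val /=; lia.
Qed.

Lemma peb_inner (i : idx d n) : peb i = VbM1 (inner i).
Proof.
apply/forallP/forallP => h c.
  by rewrite !ffunE -tau_midc; exact: (implyP (h (mid c)) (mid_mid c)).
apply/implyP => /mid_surj [c' ->].
by have := h c'; rewrite !ffunE tau_midc.
Qed.


Lemma outer_eq (i : idx d n) (u : idx d 2) :
  (outer i == u) = (i ord0 == u ord0) && (i ord_max == u ord_max).
Proof. by rewrite eq2 !ffunE eqxx max0. Qed.

Lemma outer0 (i : idx d n) : outer i ord0 = i ord0.
Proof. by rewrite ffunE eqxx. Qed.
Lemma outerm (i : idx d n) : outer i ord_max = i ord_max.
Proof. by rewrite ffunE max0. Qed.

Lemma maxlift : (ord_max : 'I_n) = lift ord0 ord_max.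
Proof.
apply: val_inj.
by change (nat_of_ord (ord_max : 'I_n) = nat_of_ord (lift ord0 (ord_max : 'I_m.+1))); rewrite lift0.
Qed.

Lemma glue0 (u : idx d 2) (k : idx d m) : glue u k ord0 = u ord0.
Proof. by rewrite ffunE unlift_none. Qed.
Lemma gluem (u : idx d 2) (k : idx d m) : glue u k ord_max = u ord_max.
Proof. by rewrite ffunE maxlift liftK unlift_none. Qed.
Lemma glue_mid (u : idx d 2) (k : idx d m) c : glue u k (mid c) = k c.
Proof. by rewrite ffunE /mid !liftK. Qed.

Lemma outer_glue (u : idx d 2) (k : idx d m) : outer (glue u k) = u.
Proof. by apply/eqP; rewrite outer_eq glue0 gluem !eqxx. Qed.
Lemma inner_glue (u : idx d 2) (k : idx d m) : inner (glue u k) = k.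
Proof. by apply/ffunP => c; rewrite ffunE glue_mid. Qed.
Lemma glue_oi (i : idx d n) : glue (outer i) (inner i) = i.
Proof.
apply/ffunP => c; rewrite ffunE.
case: (unliftP ord0 c) => [c1 ->|->]; last by rewrite outer0.
case: (unliftP ord_max c1) => [c2 ->|->]; first by rewrite ffunE.
by rewrite outerm maxlift.
Qed.

Lemma sum_glue (F : idx d n -> C) (u : idx d 2) :
  \sum_(k : idx d m) F (glue u k) = \sum_(i : idx d n) (outer i == u)%:R * F i.
Proof.
have e : forall i : idx d n, \sum_(k : idx d m) ((glue u k == i)%:R : C) = (outer i == u)%:R.
  move=> i; apply: (@sum_pred1b _ _ (inner i)) => k.
  apply/idP/idP.
    by move/eqP <-; rewrite inner_glue outer_glue !eqxx.
  by case/andP => /eqP -> /eqP <-; rewrite glue_oi.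
rewrite (eq_bigr (fun i => \sum_(k : idx d m) (glue u k == i)%:R * F i)); last first.
  by move=> i _; rewrite -mulr_suml e.
rewrite exchange_big /=; apply: eq_bigr => k _.
by rewrite sum_eqF.
Qed.

Lemma peb_glue (u v : idx d 2) (k : idx d m) : peb (glue u k) = peb (glue v k).
Proof. by rewrite !peb_inner !inner_glue. Qed.

Lemma XtE (Y : op C d n) (u v : idx d 2) :
  ptr_mid (mulop Y (@Vpm1 C d q.+2)) u v =
  \sum_(i : idx d n) \sum_(l : idx d n)
     ((outer i == u) && (outer l == v) && peb i && peb l)%:R * Y i l.
Proof.
rewrite /ptr_mid /mulop.
pose H := fun i : idx d n => \sum_(l : idx d n)
     ((outer l == v) && peb i && peb l)%:R * Y i l.
rewrite (eq_bigr (fun k => H (glue u k))); last first.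
  move=> k _; rewrite /H; apply: eq_bigr => l _.
  rewrite Vpm1E mulrC /Vb (peb_glue v u) glue0 gluem outer_eq; congr (_%:R * _).
  by rewrite !(eq_sym (l _)); case: (peb l); case: (peb (glue u k)); rewrite ?andbF ?andbT.
rewrite sum_glue; apply: eq_bigr => i _; rewrite /H mulr_sumr; apply: eq_bigr => l _.
by rewrite mulrA natbM !andbA.
Qed.


Lemma part2 (X : op C d n) :
  mulop (mulop (@Vpm1 C d q.+2) X) (@Vpm1 C d q.+2) =
  tens (ptr_mid (mulop X (@Vpm1 C d q.+2))) (@Vmid C d q.+2).
Proof.
apply: functional_extensionality => i; apply: functional_extensionality => j.
rewrite /tens XtE VmidE -!peb_inner {1}/mulop.
rewrite (eq_bigr (fun l => \sum_(m0 : idx d n) @Vpm1 C d q.+2 i m0 * X m0 l * @Vpm1 C d q.+2 l j)); last first.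
  by move=> l _; rewrite /mulop mulr_suml.
rewrite exchange_big /= mulr_suml; apply: eq_bigr => m0 _.
rewrite mulr_suml; apply: eq_bigr => l _.
rewrite !Vpm1E -mulrA [X m0 l * _]mulrC mulrA natbM mulrAC natbM.
congr (_%:R * _); congr (nat_of_bool _).
rewrite /Vb !outer_eq !outer0 !outerm ![m0 _ == i _]eq_sym.
by case: (peb i); case: (peb m0); case: (peb l); case: (peb j); rewrite /= ?andbF ?andbT.
Qed.


Lemma ocases (c : 'I_n) : [\/ c = ord0, c = ord_max | midb c].
Proof.
case h: (midb c); first by apply: Or33.
by case/orP: (nmid (negbT h)) => /eqP ->; [apply: Or31 | apply: Or32].
Qed.

Lemma T0 : (ord0 : 'I_n) \in Tset = false. Proof. by rewrite inE. Qed.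
Lemma Tm : (ord_max : 'I_n) \in Tset. Proof. rewrite inE /=; lia. Qed.
Lemma tau_out (c : 'I_n) : ~~ midb c -> tau c = c.
Proof. by rewrite /tau => /negbTE ->. Qed.

Section P1.
Variable x0 : 'I_d.
Variables u v : idx d 2.

Definition Iw (w : idx d n) : idx d n := [ffun c => if c == ord0 then u ord0 else
  if c == ord_max then u ord_max else if c \in Tset then w c else w (tau c)].
Definition Jw (w : idx d n) : idx d n := [ffun c => if c == ord0 then v ord0 else
  if c == ord_max then v ord_max else if c \in Tset then w (tau c) else w c].
Definition gz (z : idx d n * idx d n) : idx d n :=
  [ffun c => if midb c then (if c \in Tset then z.1 c else z.2 c) else x0].

Lemma Iw0 w : Iw w ord0 = u ord0. Proof. by rewrite ffunE eqxx. Qed.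
Lemma Iwm w : Iw w ord_max = u ord_max. Proof. by rewrite ffunE max0 eqxx. Qed.
Lemma Iw_mid w c : midb c -> Iw w c = if c \in Tset then w c else w (tau c).
Proof. by case/andP => h1 h2; rewrite ffunE (negbTE h1) (negbTE h2). Qed.
Lemma Jw0 w : Jw w ord0 = v ord0. Proof. by rewrite ffunE eqxx. Qed.
Lemma Jwm w : Jw w ord_max = v ord_max. Proof. by rewrite ffunE max0 eqxx. Qed.
Lemma Jw_mid w c : midb c -> Jw w c = if c \in Tset then w (tau c) else w c.
Proof. by case/andP => h1 h2; rewrite ffunE (negbTE h1) (negbTE h2). Qed.
Lemma gz_out z c : ~~ midb c -> gz z c = x0.
Proof. by rewrite ffunE => /negbTE ->. Qed.
Lemma gz_mid z c : midb c -> gz z c = if c \in Tset then z.1 c else z.2 c.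
Proof. by rewrite ffunE => ->. Qed.

Definition condz (z : idx d n * idx d n) :=
  (outer z.1 == u) && (outer z.2 == v) && peb z.1 && peb z.2.

Lemma bij_bool (w : idx d n) (z : idx d n * idx d n) :
  ((w ord0 == x0) && (w ord_max == x0) && ((Iw w, Jw w) == z)) = (w == gz z) && condz z.
Proof.
apply/idP/idP.
- case/andP => [/andP[/eqP w0 /eqP wm] /eqP <-].
  apply/andP; split.
    apply/eqP/ffunP => c; case: (ocases c) => [->|->|hc].
    + by rewrite gz_out ?nmid0.
    + by rewrite gz_out ?nmidm.
    + rewrite gz_mid //= Iw_mid // Jw_mid //; case: (c \in Tset) => //.
  rewrite /condz /= !outer_eq Iw0 Iwm Jw0 Jwm !eqxx /=.
  apply/andP; split; apply/forallP => c; apply/implyP => hc.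
    by rewrite !Iw_mid ?tau_mid // tauT // tauK; case: (c \in Tset).
  by rewrite !Jw_mid ?tau_mid // tauT // tauK; case: (c \in Tset).
- case/andP => /eqP ->; case: z => z1 z2; rewrite /condz /=.
  case/andP => [/andP[/andP[o1 o2] /forallP p1] /forallP p2].
  rewrite !gz_out ?nmid0 ?nmidm // !eqxx /=.
  move: o1 o2; rewrite !outer_eq => /andP[/eqP e1 /eqP e2] /andP[/eqP e3 /eqP e4].
  apply/andP; split; apply/eqP/ffunP => c /=; case: (ocases c) => [->|->|hc].
  + by rewrite Iw0.
  + by rewrite Iwm.
  + rewrite Iw_mid // !gz_mid ?tau_mid // tauT //=; case: (c \in Tset) => //=.
    by apply/esym/eqP; exact: (implyP (p1 c) hc).
  + by rewrite Jw0.
  + by rewrite Jwm.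
  + rewrite Jw_mid // !gz_mid ?tau_mid // tauT //=; case: (c \in Tset) => //=.
    by apply/esym/eqP; exact: (implyP (p2 c) hc).
Qed.

Lemma bij (Y : idx d n -> idx d n -> C) :
  \sum_(i : idx d n) \sum_(l : idx d n)
     ((outer i == u) && (outer l == v) && peb i && peb l)%:R * Y i l =
  \sum_(w : idx d n) ((w ord0 == x0) && (w ord_max == x0))%:R * Y (Iw w) (Jw w).
Proof.
rewrite pair_big /=.
have key : forall z, \sum_(w : idx d n)
   (((w ord0 == x0) && (w ord_max == x0) && ((Iw w, Jw w) == z))%:R : C) = (condz z)%:R.
  by move=> z; apply: (@sum_pred1b _ _ (gz z)) => w; rewrite bij_bool.
rewrite (eq_bigr (fun w : idx d n => \sum_(z : idx d n * idx d n)
   (((w ord0 == x0) && (w ord_max == x0) && ((Iw w, Jw w) == z))%:R * Y z.1 z.2))); last first.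
  move=> w _; rewrite (eq_bigr (fun z => ((w ord0 == x0) && (w ord_max == x0))%:R *
      (((Iw w, Jw w) == z)%:R * Y z.1 z.2))); last by move=> z _; rewrite mulrA natbM.
  by rewrite -mulr_sumr sum_eqF.
rewrite exchange_big /=; apply: eq_bigr => z _.
by rewrite -mulr_suml key.
Qed.

End P1.

Definition tauP : {perm 'I_n} := perm (can_inj tauK).

Lemma PTE (pi : {perm 'I_n}) u v w :
  ptrans Tset (Vperm C pi) (Iw u w) (Jw v w) =
  ([forall s, Aof u v w s == Bof u v w ((pi * tauP)%g s)])%:R.
Proof.
rewrite /ptrans /Vperm; congr (_%:R); congr (nat_of_bool _).
apply: eq_forallb => c; rewrite permM permE eq_sym; congr (_ == _).
- rewrite ffunE; case: (ocases c) => [->|->|hc].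
  + by rewrite T0 Jw0 /Aof eqxx.
  + by rewrite Tm Iwm /Aof max0 eqxx.
  + by rewrite Amid // Iw_mid // Jw_mid //; case: (c \in Tset).
- rewrite ffunE; case: (ocases (pi c)) => [->|->|hc].
  + by rewrite T0 Iw0 tau_out ?nmid0 // /Bof eqxx.
  + by rewrite Tm Jwm tau_out ?nmidm // /Bof max0 eqxx.
  + by rewrite Bmid ?tau_mid // Iw_mid // Jw_mid //; case: (pi c \in Tset).
Qed.

End S.


Lemma A11_sum (C : numClosedFieldType) (d : nat) (I : finType) (cf : I -> C)
  (F : I -> op C d 2) : (forall x, in_A11 (F x)) ->
  in_A11 (fun u v => \sum_(x : I) cf x * F x u v).
Proof.
move=> hF.
have : forall r : seq I, in_A11 (fun u v => \sum_(x <- r) cf x * F x u v).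
  elim => [|x r [a1 [b1 IH]]].
    by exists 0, 0 => u v; rewrite big_nil !mul0r addr0.
  have [a2 [b2 H2]] := hF x.
  exists (cf x * a2 + a1), (cf x * b2 + b1) => u v.
  rewrite big_cons H2 IH !mulrDl !mulrDr !mulrA.
  by rewrite addrACA.
by apply.
Qed.

Theorem fact6 (C : numClosedFieldType) (d p : nat) (hd : (2 <= d)%N) (hp : (2 <= p)%N)
  (X : op C d (nsys p)) :
  in_App p X ->
  let Xt := ptr_mid (mulop X (Vpm1 p)) in
  in_A11 Xt /\
  mulop (mulop (Vpm1 p) X) (Vpm1 p) = tens Xt (Vmid p).
Proof.
case: p hp X => [|[|q]] // _ X [a hX] Xt.
split; last exact: part2.
have hd0 : (0 < d)%N by lia.
pose x0 : 'I_d := Ordinal hd0.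
have E : forall u v, Xt u v =
    \sum_(pi : {perm 'I_(nsys q.+2)}) a pi * Q C x0 (pi * tauP q)%g u v.
  move=> u v; rewrite /Xt XtE (bij x0).
  rewrite (eq_bigr (fun w : idx d (nsys q.+2) => \sum_(pi : {perm 'I_(nsys q.+2)})
     a pi * (((w ord0 == x0) && (w ord_max == x0))%:R *
        ptrans (Tset q) (Vperm C pi) (Iw u w) (Jw v w)))); last first.
    by move=> w _; rewrite hX mulr_sumr; apply: eq_bigr => pi _; rewrite mulrCA.
  rewrite exchange_big /=; apply: eq_bigr => pi _.
  rewrite -mulr_sumr /Q; congr (_ * _); apply: eq_bigr => w _.
  by rewrite PTE natbM /Gq andbA.
have [al [be H]] : in_A11 (fun u v =>
    \sum_(pi : {perm 'I_(nsys q.+2)}) a pi * Q C x0 (pi * tauP q)%g u v).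
  by apply: A11_sum => pi; apply: qA11.
by exists al, be => u v; rewrite E H.
Qed.
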